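(* Let $p$ be a self-adjoint projection of $V$, let $g_0$ be an invertible self-adjoint transformation generating a $p$-quadric $\Phi_0$, and let $l_\lambda$ be self-adjoint transformations leaving $\operatorname{Im}p$ invariant with $l_\lambda^2=\mathrm{id}-\lambda g_0$ on $\operatorname{Im}p$ (as in the family constructed for the projection pencil of $p$ and $g_0^{-1}$, where $\Phi_\lambda$ is generated by $g_\lambda$ with $g_\lambda^{-1}=g_0^{-1}-\lambda p$). Let $\Psi\neq\Phi_0$ be a $p$-quadric belonging to the same projection pencil (of $p$ and $g_0^{-1}$), generated by $g_\mu$ with $g_\mu^{-1}=g_0^{-1}-\mu p$, $\mu\neq0$. If $u\in\Phi_0\cap\Psi\cap\operatorname{Im}p$, then $l_\lambda(u)\in\Psi$.
   Context: $V$ is a real vector space of dimension $n+1$ with a fixed indefinite inner product (nondegenerate symmetric bilinear form) $\langle\cdot,\cdot\rangle$; self-adjoint means $\langle g(x),y\rangle=\langle x,g(y)\rangle$. A projection is $p$ with $p^2=p$; $V=\operatorname{Im}p\oplus\operatorname{Ker}p$. The quadric generated by a self-adjoint $g$ is the zero set in $P(V)$ of $x\mapsto\langle x,g(x)\rangle$; its dual is given by $g^{-1}$. The projection pencil of $p$ and $g_0^{-1}$ consists of the quadrics whose dual transformations lie in $\operatorname{span}(g_0^{-1},p)$. A quadric generated by $g$ is a $p$-quadric if $g(u+v)=p(g(u))-v$ for all $u\in\operatorname{Im}p$, $v\in\operatorname{Ker}p$. *)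

(* Defs.v *)
From HB Require Import structures.
From mathcomp Require Import all_boot all_order all_algebra.
Set Implicit Arguments. Unset Strict Implicit. Unset Printing Implicit Defensive.
Import Order.TTheory GRing.Theory Num.Theory.
Local Open Scope ring_scope.

(* V = 'cV[R]_(n.+1) (dimension n+1); the inner product is <x,y> = x^T J y
   for a symmetric invertible (= nondegenerate) matrix J. *)

Definition form (R : realFieldType) (n : nat) (J : 'M[R]_n.+1)
  (x y : 'cV[R]_n.+1) : R := (x^T *m J *m y) 0 0.

Definition indefinite_inner_product (R : realFieldType) (n : nat)
  (J : 'M[R]_n.+1) : Prop :=
  [/\ J^T = J, J \in unitmx,
      exists x, 0 < form J x x & exists y, form J y y < 0].

Definition self_adjoint (R : realFieldType) (n : nat) (J : 'M[R]_n.+1)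
  (g : 'M[R]_n.+1) : Prop :=
  forall x y, form J (g *m x) y = form J x (g *m y).

Definition projection (R : realFieldType) (n : nat) (p : 'M[R]_n.+1) : Prop :=
  p *m p = p.

(* x \in Im p  (for a projection p: p x = x);  x \in Ker p: p x = 0 *)
Definition in_Im (R : realFieldType) (n : nat) (p : 'M[R]_n.+1)
  (x : 'cV[R]_n.+1) : Prop := p *m x = x.
Definition in_Ker (R : realFieldType) (n : nat) (p : 'M[R]_n.+1)
  (x : 'cV[R]_n.+1) : Prop := p *m x = 0.

(* The vector x (a representative of a point of P(V)) lies on the quadric
   generated by g: <x, g(x)> = 0. *)
Definition on_quadric (R : realFieldType) (n : nat) (J g : 'M[R]_n.+1)
  (x : 'cV[R]_n.+1) : Prop := form J x (g *m x) = 0.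

Definition p_quadric (R : realFieldType) (n : nat) (p g : 'M[R]_n.+1) : Prop :=
  forall u v, in_Im p u -> in_Ker p v ->
    g *m (u + v) = p *m (g *m u) - v.

(* Main.v *)
Require Import Defs.
From HB Require Import structures.
From mathcomp Require Import all_boot all_order all_algebra.
Import Order.TTheory GRing.Theory Num.Theory.
Local Open Scope ring_scope.

Section S.
Variables (R : realFieldType) (n : nat) (J : 'M[R]_n.+1).
Implicit Types x y z : 'cV[R]_n.+1.
Lemma formBl x y z : Defs.form J (x - y) z = Defs.form J x z - Defs.form J y z.
Proof. by rewrite /Defs.form linearB /= !mulmxBl !mxE. Qed.
Lemma formZl c x z : Defs.form J (c *: x) z = c * Defs.form J x z.
Proof. by rewrite /Defs.form linearZ /= -!scalemxAl !mxE. Qed.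
Lemma formBr x y z : Defs.form J x (y - z) = Defs.form J x y - Defs.form J x z.
Proof. by rewrite /Defs.form mulmxBr !mxE. Qed.
Lemma formZr c x z : Defs.form J x (c *: z) = c * Defs.form J x z.
Proof. by rewrite /Defs.form -scalemxAr !mxE. Qed.
End S.

Theorem mainTheorem5 (R : realFieldType) (n : nat) (J : 'M[R]_n.+1)
  (p g0 gmu l : 'M[R]_n.+1) (lambda mu : R) (u : 'cV[R]_n.+1) :
  indefinite_inner_product J ->
  projection p -> self_adjoint J p ->
  g0 \in unitmx -> self_adjoint J g0 -> p_quadric p g0 ->
  self_adjoint J l ->
  (forall x, in_Im p x -> in_Im p (l *m x)) ->
  (forall x, in_Im p x -> l *m (l *m x) = x - lambda *: (g0 *m x)) ->
  (lambda = 0 -> forall x, in_Im p x -> l *m (g0 *m x) = g0 *m (l *m x)) ->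
  gmu \in unitmx -> invmx gmu = invmx g0 - mu *: p -> mu != 0 ->
  self_adjoint J gmu -> p_quadric p gmu ->
  u != 0 -> on_quadric J g0 u -> on_quadric J gmu u -> in_Im p u ->
  on_quadric J gmu (l *m u).
Proof.
move=> _ _ _ Ug0 SAg0 Pg0 SAl Iml Ll Hl0 Ugmu Einv mu0 SAgmu Pgmu _ Hu0 Humu Ipu.
rewrite /on_quadric in Hu0 Humu *.
have ImG0 : forall x, in_Im p x -> in_Im p (g0 *m x).
  move=> x Hx; have := Pg0 x 0 Hx (mulmx0 _ _); rewrite addr0 subr0 => E.
  exact: esym E.
have ImGmu : forall x, in_Im p x -> in_Im p (gmu *m x).
  move=> x Hx; have := Pgmu x 0 Hx (mulmx0 _ _); rewrite addr0 subr0 => E.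
  exact: esym E.
have rel : forall z, in_Im p z -> g0 *m (invmx gmu *m z) = z - mu *: (g0 *m z).
  move=> z Hz; rewrite Einv mulmxBl -scalemxAl Hz mulmxBr mulKVmx //.
  by rewrite scalemxAr.
have relx : forall x, in_Im p x -> g0 *m x = gmu *m x - mu *: (g0 *m (gmu *m x)).
  move=> x Hx; rewrite -{1}(mulKmx Ugmu x); exact: rel (ImGmu x Hx).
have commg0 : forall x, in_Im p x -> l *m (g0 *m x) = g0 *m (l *m x).
  move=> x Hx; case: (eqVneq lambda 0) => [L0|l0]; first exact: Hl0 L0 x Hx.
  have H : l *m x - lambda *: (g0 *m (l *m x)) = l *m x - lambda *: (l *m (g0 *m x)).
    rewrite -(Ll (l *m x)); last exact: Iml.
    by rewrite (Ll x Hx) mulmxBr linearZ.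
  apply: (scalerI l0); apply: oppr_inj; apply: (addrI (l *m x)); by rewrite H.
have commgmu : forall x, in_Im p x -> l *m (gmu *m x) = gmu *m (l *m x).
  move=> x Hx; set w := l *m (gmu *m x) - gmu *m (l *m x).
  have Hw : in_Im p w by rewrite /in_Im /w mulmxBr (Iml _ (ImGmu x Hx)) (ImGmu _ (Iml x Hx)).
  have H : g0 *m (invmx gmu *m w) = 0.
    rewrite rel // /w mulmxBr scalerBr -(commg0 (gmu *m x) (ImGmu x Hx)).
    have e1 := relx x Hx; have e2 := relx (l *m x) (Iml x Hx).
    suff : (l *m (gmu *m x) - mu *: (l *m (g0 *m (gmu *m x)))) -
       (gmu *m (l *m x) - mu *: (g0 *m (gmu *m (l *m x)))) = 0.
      move=> <-. rewrite !opprB addrACA [in RHS]addrACA; congr (_ + _); exact: addrC.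
    by rewrite scalemxAr -mulmxBr -e1 -e2 commg0 // subrr.
  have H2 : invmx gmu *m w = 0 by rewrite -(mulKmx Ug0 (invmx gmu *m w)) H mulmx0.
  apply/eqP; rewrite -subr_eq0 -/w; apply/eqP.
  by rewrite -(mulKVmx Ugmu w) H2 mulmx0.
rewrite -(commgmu u Ipu) -SAl (Ll u Ipu) formBl formZl Humu SAg0.
have e := relx u Ipu.
have K : mu * Defs.form J u (g0 *m (gmu *m u)) = 0.
  rewrite -formZr.
  have -> : mu *: (g0 *m (gmu *m u)) = gmu *m u - g0 *m u.
    by rewrite e opprB addrC subrK.
  by rewrite formBr Humu Hu0 subrr.
move/eqP: K; rewrite mulf_eq0 (negbTE mu0) /= => /eqP ->.
by rewrite mulr0 subrr.
Qed.
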